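(* Let $\Lambda\subset\mathbb{D}$ be discrete and $f:\mathbb{D}\setminus\Lambda\to\mathbb{C}$. (1) Let $w_1,\dots,w_k\in\mathbb{D}$ (not necessarily distinct, and possibly meeting $\Lambda$), and let $g$ be defined on $(\mathbb{D}\setminus\Lambda)\cup\{w_1,\dots,w_k\}$ with $g=f$ on $\mathbb{D}\setminus\Lambda$. Then for every $n\ge1$, $$\mathbf{k}_n(f)\le\mathbf{k}_n(g)\le\max_{0\le r\le\min\{k,n\}}\{\mathbf{k}_{n-r}(f)+r\}\le\mathbf{k}_n(f)+k.$$ (2) If $g$ is defined on $\mathbb{D}\setminus\Lambda$ and $g(z)=f(z)$ for all $z\in\mathbb{D}\setminus\Lambda$ except at $k$ distinct points $z_1,\dots,z_k\in\mathbb{D}\setminus\Lambda$, then $\mathbf{k}_n(g)\le\mathbf{k}_n(f)+k$ for every $n\ge1$.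
   Context: $\mathbb{D}$ is the open unit disk; a set $\Lambda\subset\mathbb{D}$ is discrete if it is at most countable with accumulation points only on the unit circle. Pick matrix: $P_n(f;z_1,\dots,z_n)=\left[\frac{1-f(z_i)\overline{f(z_j)}}{1-z_i\overline{z_j}}\right]_{i,j=1}^n$ for distinct $z_i\in\mathrm{Dom}(f)$. $\mathrm{sq}_-P$ = number of negative eigenvalues (with multiplicity) of a Hermitian $P$. $\mathbf{k}_n(f)=\max\mathrm{sq}_-P_n(f;z_1,\dots,z_n)$ over distinct $z_1,\dots,z_n\in\mathrm{Dom}(f)$, and $\mathbf{k}_0(f)=0$. *)

(* Defs.v *)
From HB Require Import structures.
From mathcomp Require Import all_boot all_order all_algebra.
From mathcomp Require Import complex.
From mathcomp Require Import boolp classical_sets cardinality reals.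
Set Implicit Arguments. Unset Strict Implicit. Unset Printing Implicit Defensive.
Import Order.TTheory GRing.Theory Num.Theory.
Local Open Scope ring_scope.
Local Open Scope classical_set_scope.

(* Sequence of eigenvalues (with algebraic multiplicity) of a square complex
   matrix: the roots of its characteristic polynomial, which splits over the
   algebraically closed field R[i]. *)
Definition eigseq (R : realType) (n : nat) (A : 'M[R[i]]_n) : seq R[i] :=
  sval (closed_field_poly_normal (char_poly A)).

Definition sqneg (R : realType) (n : nat) (A : 'M[R[i]]_n) : nat :=
  count (fun x => x < 0) (eigseq A).

Definition pick_mx (R : realType) (n : nat) (f : R[i] -> R[i])
  (z : 'I_n -> R[i]) : 'M[R[i]]_n :=
  \matrix_(i < n, j < n) ((1 - f (z i) * (f (z j))^*) / (1 - z i * (z j)^*)).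

(* k_n(f) for f with domain Dom : the maximum of sq_- P_n(f; z_1..z_n) over
   distinct z_1, ..., z_n in Dom (0 if there are no such points; k_0 = 0). *)
Definition kn (R : realType) (Dom : set R[i]) (f : R[i] -> R[i]) (n : nat) : nat :=
  \max_(m < n.+1 | `[< exists z : 'I_n -> R[i],
        [/\ injective z, (forall i, Dom (z i)) & sqneg (pick_mx f z) = m] >]) m.

Definition disk (R : realType) : set R[i] := [set z | `|z| < 1].
Arguments disk R : clear implicits.

(* Lambda is discrete: a subset of the disk, at most countable, with no
   accumulation point in the disk (accumulation points only on the circle). *)
Definition discrete_in_disk (R : realType) (L : set R[i]) : Prop :=
  [/\ L `<=` disk R, countable L &
      forall z, `|z| < 1 -> exists2 r : R, 0 < r &
        finite_set (L `&` [set x | `|x - z| < (r%:C)%C])].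

(* Main.v *)
Require Import Defs.
From HB Require Import structures.
From mathcomp Require Import all_boot all_order all_algebra.
From mathcomp Require Import complex.
From mathcomp Require Import boolp classical_sets cardinality reals.
From mathcomp Require Import sesquilinear spectral zify lra.
Set Implicit Arguments. Unset Strict Implicit. Unset Printing Implicit Defensive.
Import Order.TTheory GRing.Theory Num.Theory.
Local Open Scope ring_scope.
Section LA.
Variable C : numClosedFieldType.

Definition ctr m n (M : 'M[C]_(m,n)) : 'M[C]_(n,m) := map_mx Num.conj (M^T).
Definition hform n (A : 'M[C]_n) (v : 'rV[C]_n) : C := (v *m A *m ctr v) 0 0.

Lemma ctrM m n p (A : 'M[C]_(m,n)) (B : 'M[C]_(n,p)) : ctr (A *m B) = ctr B *m ctr A.
Proof. by rewrite /ctr trmx_mul map_mxM. Qed.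

Lemma ctrK m n (A : 'M[C]_(m,n)) : ctr (ctr A) = A.
Proof. by apply/matrixP => i j; rewrite !mxE conjCK. Qed.

Lemma ctrN m n (A : 'M[C]_(m,n)) : ctr (- A) = - ctr A.
Proof. by apply/matrixP => i j; rewrite !mxE rmorphN. Qed.

Lemma hform_mul m n (A : 'M[C]_n) (E : 'M[C]_(m,n)) v :
  hform (E *m A *m ctr E) v = hform A (v *m E).
Proof. by rewrite /hform ctrM !mulmxA. Qed.

Lemma hformN n (A : 'M[C]_n) v : hform A (- v) = hform A v.
Proof. by rewrite /hform ctrN mulNmx mulmxN mulNmx opprK. Qed.

Lemma unitary_ctr n (P : 'M[C]_n) : P \is unitarymx -> P *m ctr P = 1%:M.
Proof. by move/unitarymxP. Qed.

Lemma invmx_ctr n (P : 'M[C]_n) : P \is unitarymx -> invmx P = ctr P.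
Proof. by move/invmx_unitary. Qed.

Lemma exists_ker m n (X : 'M[C]_(m,n)) : (n < m)%N ->
  exists2 w : 'rV[C]_m, w != 0 & w *m X = 0.
Proof.
move=> lt.
have : ~~ row_free X.
  rewrite /row_free; apply/negP => /eqP H.
  by move: (rank_leq_col X); rewrite H leqNgt lt.
rewrite -kermx_eq0 => /eqP K.
case: (pickP (fun i => row i (kermx X) != 0)) => [i Hi|H0].
  exists (row i (kermx X)) => //; by rewrite -row_mul mulmx_ker row0.
exfalso; apply: K; apply/row_matrixP => i; rewrite row0.
by move: (H0 i) => /= /negbFE/eqP.
Qed.

Lemma dim_bound m q n (A : 'M[C]_n) (M : 'M[C]_(m,n)) (Q : 'M[C]_(q,n)) :
  (forall u : 'rV_m, u != 0 -> hform A (u *m M) < 0) ->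
  (forall u : 'rV_q, 0 <= hform A (u *m Q)) ->
  (forall u : 'rV_q, u *m Q = 0 -> u = 0) ->
  (m + q <= n)%N.
Proof.
move=> Hneg Hpos Hinj; rewrite leqNgt; apply/negP => lt.
have [w w0 wX] := exists_ker (col_mx M Q) lt.
move: wX; rewrite -[w]hsubmxK mul_row_col => /eqP; rewrite addr_eq0 => /eqP E.
have [a0|a0] := eqVneq (lsubmx w) 0.
  move: E; rewrite a0 mul0mx => /esym /eqP; rewrite oppr_eq0 => /eqP /Hinj b0.
  by move: w0; rewrite -[w]hsubmxK a0 b0 row_mx0 eqxx.
have := Hneg _ a0; rewrite E hformN.
by rewrite (le_gtF (Hpos _)).
Qed.
Definition sel m n (h : 'I_m -> 'I_n) : 'M[C]_(m,n) := \matrix_(k, j) (h k == j)%:R.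

Lemma sel_sandwich m n (h : 'I_m -> 'I_n) (A : 'M[C]_n) :
  sel h *m A *m ctr (sel h) = \matrix_(k, l) A (h k) (h l).
Proof.
apply/matrixP => k l; rewrite !mxE (bigD1 (h l)) //= big1 ?addr0.
  rewrite !mxE eqxx rmorph1 mulr1 (bigD1 (h k)) //= big1 ?addr0.
    by rewrite mxE eqxx mul1r.
  by move=> i /negbTE ne; rewrite mxE eq_sym ne mul0r.
move=> j /negbTE ne; rewrite !mxE eq_sym ne rmorph0 mulr0 //.
Qed.

Lemma sel_inj m n (h : 'I_m -> 'I_n) (u : 'rV[C]_m) : injective h ->
  u *m sel h = 0 -> u = 0.
Proof.
move=> hi /matrixP E; apply/rowP => k.
have := E 0 (h k); rewrite !mxE (bigD1 k) //= big1 ?addr0.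
  by rewrite mxE eqxx mulr1.
by move=> j /negbTE ne; rewrite mxE (inj_eq hi) ne mulr0.
Qed.

Lemma hform_diag m (e : 'I_m -> C) (u : 'rV[C]_m) :
  hform (\matrix_(k, l) (e k *+ (k == l))) u = \sum_l u 0 l * Num.conj (u 0 l) * e l.
Proof.
rewrite /hform !mxE; apply: eq_bigr => l _.
rewrite !mxE (bigD1 l) //= big1 ?addr0.
  by rewrite !mxE eqxx mulr1n mulrAC.
by move=> j /negbTE ne; rewrite mxE ne mulr0n mulr0.
Qed.
Definition herm n (A : 'M[C]_n) := ctr A = A.

Lemma herm_hermsym n (A : 'M[C]_n) : herm A -> A \is hermsymmx.
Proof. by rewrite /herm => H; apply/is_hermitianmxP; rewrite expr0 scale1r -[LHS]H. Qed.

Lemma spec_eq n (A : 'M[C]_n) : herm A ->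
  A = ctr (spectralmx A) *m diag_mx (spectral_diag A) *m spectralmx A.
Proof.
move=> /herm_hermsym /hermitian_normalmx /orthomx_spectralP E.
by rewrite {1}E invmx_ctr // spectral_unitarymx.
Qed.

Lemma spec_sel n (A : 'M[C]_n) m (h : 'I_m -> 'I_n) : herm A -> injective h ->
  (forall u : 'rV_m, hform A (u *m (sel h *m spectralmx A)) =
     \sum_l u 0 l * Num.conj (u 0 l) * spectral_diag A 0 (h l)) /\
  (forall u : 'rV_m, u *m (sel h *m spectralmx A) = 0 -> u = 0).
Proof.
move=> hA hi; set P := spectralmx A; set d := spectral_diag A.
have Pu : P \is unitarymx by exact: spectral_unitarymx.
split => u.
  rewrite {1}(spec_eq hA) -/P -/d. rewrite -{2}(ctrK P) hform_mul.
  rewrite -!mulmxA unitary_ctr // mulmx1 -hform_mul sel_sandwich.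
  rewrite -hform_diag; congr hform; apply/matrixP => k l.
  by rewrite !mxE (inj_eq hi).
move=> E; apply: (sel_inj hi).
have Pi : P \in unitmx by exact: unitarymx_unit.
by rewrite -[u *m sel h](mulmxK Pi) -(mulmxA u) E mul0mx.
Qed.
Lemma sum_neg m (u : 'rV[C]_m) (e : 'I_m -> C) : u != 0 -> (forall l, e l < 0) ->
  \sum_l u 0 l * Num.conj (u 0 l) * e l < 0.
Proof.
move=> u0 eN.
have [l ul] : exists l, u 0 l != 0.
  apply/existsP; apply: contraR u0; rewrite negb_exists => /forallP H.
  by apply/eqP/rowP => l; rewrite mxE; apply/eqP; move: (H l); rewrite negbK.
rewrite (bigD1 l) //=; apply: (@le_lt_trans _ _ (u 0 l * (u 0 l)^* * e l)).
  rewrite gerDl; apply: sumr_le0 => i _.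
  by apply: mulr_ge0_le0; [exact: mul_conjC_ge0 | exact: ltW].
by rewrite pmulr_rlt0 ?mul_conjC_gt0.
Qed.
Definition negset n (A : 'M[C]_n) : {set 'I_n} := [set i | spectral_diag A 0 i < 0].

Lemma spec_neg n (A : 'M[C]_n) : herm A ->
  exists M : 'M[C]_(#|negset A|, n), forall u, u != 0 -> hform A (u *m M) < 0.
Proof.
move=> hA; have [H _] := spec_sel hA (@enum_val_inj _ (mem (negset A))).
exists (sel enum_val *m spectralmx A) => u u0; rewrite H.
apply: sum_neg => // l.
by have := enum_valP l; rewrite inE.
Qed.

Lemma spec_pos n (A : 'M[C]_n) : herm A ->
  exists Q : 'M[C]_(#|~: negset A|, n), (forall u, 0 <= hform A (u *m Q)) /\
     (forall u : 'rV_ _, u *m Q = 0 -> u = 0).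
Proof.
move=> hA; have [H1 H2] := spec_sel hA (@enum_val_inj _ (mem (~: negset A))).
exists (sel (@enum_val _ (mem (~: negset A))) *m spectralmx A); split => // u; rewrite H1.
apply: sumr_ge0 => l _; apply: mulr_ge0; first exact: mul_conjC_ge0.
have := enum_valP l; rewrite !inE.
have /mxOverP := hermitian_spectral_diag_real (herm_hermsym hA).
move=> /(_ 0 (enum_val l)) Hr.
by rewrite real_ltNge ?real0 // negbK.
Qed.

Lemma herm_sandwich n p (A : 'M[C]_n) (E : 'M[C]_(p,n)) : herm A -> herm (E *m A *m ctr E).
Proof. by rewrite /herm => hA; rewrite !ctrM ctrK hA mulmxA. Qed.

Lemma interlace n p (A : 'M[C]_n) (E : 'M[C]_(p,n)) : herm A ->
  (forall u : 'rV_p, u *m E = 0 -> u = 0) ->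
  (#|negset (E *m A *m ctr E)| <= #|negset A|)%N /\
  (#|negset A| <= #|negset (E *m A *m ctr E)| + (n - p))%N.
Proof.
move=> hA hE; have hB := herm_sandwich E hA.
have [MA HMA] := spec_neg hA; have [QA [HQA1 HQA2]] := spec_pos hA.
have [MB HMB] := spec_neg hB; have [QB [HQB1 HQB2]] := spec_pos hB.
have cA := cardsC (negset A); have cB := cardsC (negset (E *m A *m ctr E)).
rewrite card_ord in cA; rewrite card_ord in cB.
split.
  have H1 : forall u : 'rV_ _, u != 0 -> hform A (u *m (MB *m E)) < 0.
    by move=> u /HMB; rewrite hform_mul mulmxA.
  have := dim_bound H1 HQA1 HQA2; lia.
have H1 : forall u : 'rV_ _, 0 <= hform A (u *m (QB *m E)).
  by move=> u; have := HQB1 u; rewrite hform_mul mulmxA.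
have Hi : forall u : 'rV_ _, u *m (QB *m E) = 0 -> u = 0.
  by move=> u; rewrite mulmxA => /hE /HQB2.
have := dim_bound HMA H1 Hi; lia.
Qed.
Lemma char_poly_sim n (P D : 'M[C]_n) : P \is unitarymx ->
  char_poly (ctr P *m D *m P) = char_poly D.
Proof.
move=> Pun; have Pu := unitarymx_unit Pun; rewrite -invmx_ctr // /char_poly.
have -> : char_poly_mx (invmx P *m D *m P) =
   map_mx polyC (invmx P) *m char_poly_mx D *m map_mx polyC P.
  rewrite /char_poly_mx mulmxBr mulmxBl !map_mxM.
  congr (_ - _); first by rewrite scalar_mxC -mulmxA -map_mxM mulVmx // map_mx1 mulmx1.
rewrite !det_mulmx mulrAC -det_mulmx -map_mxM mulVmx // map_mx1 det1 mul1r.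
done.
Qed.

Lemma card_count n (p : pred 'I_n) : #|[set i | p i]| = count p (enum 'I_n).
Proof. rewrite cardsE cardE /enum_mem size_filter count_filter; apply: eq_count => x; rewrite /= andbT.
by [].
Qed.

Lemma count_eig n (A : 'M[C]_n) (s : seq C) : herm A ->
  char_poly A = lead_coef (char_poly A) *: \prod_(z <- s) ('X - z%:P) ->
  count (fun x => x < 0) s = #|negset A|.
Proof.
move=> hA; rewrite (monicP (char_poly_monic A)) scale1r => E.
have E2 : char_poly A = \prod_(z <- [seq spectral_diag A 0 i | i <- enum 'I_n]) ('X - z%:P).
  rewrite big_map enumT {1}(spec_eq hA).
  rewrite char_poly_sim ?spectral_unitarymx //.
  by rewrite char_poly_trig ?diag_mx_is_trig //; apply: eq_bigr => i _; rewrite mxE eqxx mulr1n.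
have /permP Hp := prod_XsubC_eq (etrans (esym E) E2).
by rewrite Hp count_map /negset card_count.
Qed.
End LA.

Section App.
Variable R : realType.
Local Notation C := R[i].

Lemma pick_herm n f (z : 'I_n -> C) : herm (pick_mx f z).
Proof.
apply/matrixP => i j; rewrite !mxE rmorphM fmorphV !rmorphB !rmorph1 !rmorphM /= !conjCK.
by rewrite (mulrC _ (f (z i))) (mulrC _ (z i)).
Qed.

Lemma sqnegE n (A : 'M[C]_n) : herm A -> sqneg A = #|negset A|.
Proof.
move=> hA; rewrite /sqneg /eigseq; case: closed_field_poly_normal => s Hs /=.
exact: count_eig.
Qed.

Lemma sqneg_le n (A : 'M[C]_n) : herm A -> (sqneg A <= n)%N.
Proof. by move=> hA; rewrite sqnegE // -[X in (_ <= X)%N]card_ord max_card. Qed.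

Lemma pick_sel n p f (z : 'I_n -> C) (h : 'I_p -> 'I_n) :
  sel C h *m pick_mx f z *m ctr (sel C h) = pick_mx f (fun k => z (h k)).
Proof. by rewrite sel_sandwich; apply/matrixP => k l; rewrite !mxE. Qed.

Lemma pick_interlace n p f (z : 'I_n -> C) (h : 'I_p -> 'I_n) : injective h ->
  (sqneg (pick_mx f (fun k => z (h k))) <= sqneg (pick_mx f z))%N /\
  (sqneg (pick_mx f z) <= sqneg (pick_mx f (fun k => z (h k))) + (n - p))%N.
Proof.
move=> hi; rewrite -(pick_sel f z h).
have hA := pick_herm f z; rewrite !sqnegE ?herm_sandwich //.
by apply: interlace => // u; apply: sel_inj.
exact: herm_sandwich.
Qed.

Lemma kn_le (Dom : set C) f n (z : 'I_n -> C) : injective z -> (forall i, Dom (z i)) ->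
  (sqneg (pick_mx f z) <= kn Dom f n)%N.
Proof.
move=> zi zD; have H : (sqneg (pick_mx f z) < n.+1)%N by rewrite ltnS; apply: sqneg_le; apply: pick_herm.
rewrite /kn; apply: (@leq_bigmax_cond _ _ (fun m : 'I_n.+1 => nat_of_ord m) (Ordinal H)).
by apply/asboolP; exists z.
Qed.

Lemma kn_ub (Dom : set C) f n K :
  (forall z : 'I_n -> C, injective z -> (forall i, Dom (z i)) -> (sqneg (pick_mx f z) <= K)%N) ->
  (kn Dom f n <= K)%N.
Proof.
move=> H; apply/bigmax_leqP => m /asboolP [z [zi zD <-]]; exact: H.
Qed.

Local Open Scope classical_set_scope.

Lemma fresh (L : set C) : discrete_in_disk L ->
  forall s : seq C, exists x, (disk R `\` L) x /\ x \notin s.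
Proof.
case=> _ _ H s.
have [|r r0 Fin] := H 0; first by rewrite normr0 ltr01.
pose rho := r / (1 + r).
have r1 : 0 < 1 + r by lra.
have rho0 : 0 < rho by rewrite divr_gt0.
have rho1 : rho < 1 by rewrite ltr_pdivrMr //; lra.
have rhor : rho < r by rewrite ltr_pdivrMr //; nra.
pose t (j : nat) : C := ((rho / j.+1%:R)%:C)%C.
have tge : forall j, 0 <= rho / j.+1%:R.
  by move=> j; rewrite divr_ge0 // ltW.
have tle : forall j, rho / j.+1%:R <= rho.
  move=> j; rewrite ler_pdivrMr ?ltr0Sn //; have h1 : (1 <= j.+1%:R :> R) by rewrite ler1n.
  nra.
have tnorm : forall j, `|t j| = t j by move=> j; rewrite ger0_norm // ler0c.
have tinj : injective t.
  move=> i j /complexI /(mulfI (lt0r_neq0 rho0)) /invr_inj /eqP.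
  by rewrite eqr_nat eqSS => /eqP.
pose G := (L `&` [set x | `|x - 0| < (r%:C)%C]) `|` [set` s].
have : ~ (forall j, G (t j)).
  move=> allG.
  have : finite_set (t @^-1` G).
    apply: finite_preimage; first by move=> i j _ _; apply: tinj.
    by rewrite finite_setU; split; [exact: Fin | exact: finite_seq].
  have -> : t @^-1` G = setT by apply/seteqP; split => // j _; apply: allG.
  exact: infinite_nat.
move/existsNP => [j Hj]; exists (t j); split; [split|].
- by rewrite /disk /= tnorm ltcR; apply: le_lt_trans (tle j) rho1.
- move=> Lt; apply: Hj; left; split => //=.
  by rewrite subr0 tnorm ltcR; apply: le_lt_trans (tle j) rhor.
- by apply/negP => ts; apply: Hj; right.
Qed.

Definition ext n (z : 'I_n -> C) (x : C) : 'I_n.+1 -> C :=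
  fun i => if insub (val i) is Some j then z j else x.

Lemma ext_widen n (z : 'I_n -> C) x i : ext z x (widen_ord (leqnSn n) i) = z i.
Proof.
rewrite /ext; case: insubP => [j _ vj|]; last by rewrite /= ltn_ord.
by congr z; apply: val_inj.
Qed.

Lemma ext_inj n (z : 'I_n -> C) x : injective z -> (forall i, z i != x) -> injective (ext z x).
Proof.
move=> zi zx i k; rewrite /ext.
case: insubP => [j _ vj|ni]; case: insubP => [l _ vl|nk].
- by move=> /zi jl; apply: val_inj; rewrite -vj -vl jl.
- by move=> E; move: (zx j); rewrite E eqxx.
- by move=> E; move: (zx l); rewrite E eqxx.
- move=> _; apply: val_inj; move: ni nk; rewrite -!leqNgt.
  change ((n <= nat_of_ord i)%N -> (n <= nat_of_ord k)%N -> nat_of_ord i = nat_of_ord k).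
  have := ltn_ord i; have := ltn_ord k; lia.
Qed.

Lemma extend (Dom : set C) : (forall s : seq C, exists x, Dom x /\ x \notin s) ->
  forall n m (z : 'I_m -> C), (m <= n)%N -> injective z -> (forall i, Dom (z i)) ->
  exists z' : 'I_n -> C, exists h : 'I_m -> 'I_n,
   [/\ injective z', (forall i, Dom (z' i)), injective h & forall i, z' (h i) = z i].
Proof.
move=> fr; elim=> [|n IH] m z le zi zD.
  have Em : m = 0%N by lia.
  by subst m; exists z, id; split.
case: (eqVneq m n.+1) => [Em|ne].
  by subst m; exists z, id; split.
have le' : (m <= n)%N by lia.
have [z' [h [z'i z'D hi zh]]] := IH m z le' zi zD.
have [x [xD xs]] := fr [seq z' i | i <- enum 'I_n].
exists (ext z' x), (fun i => widen_ord (leqnSn n) (h i)); split.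
- apply: ext_inj => // i; apply/eqP => E; move: xs.
  by rewrite -E map_f // mem_enum.
- by move=> i; rewrite /ext; case: insubP.
- by move=> i j /(congr1 val) /= /val_inj /hi.
- by move=> i; rewrite ext_widen zh.
Qed.

Lemma kn_mono (Dom : set C) f : (forall s : seq C, exists x, Dom x /\ x \notin s) ->
  forall m n, (m <= n)%N -> (kn Dom f m <= kn Dom f n)%N.
Proof.
move=> fr m n le; apply: kn_ub => z zi zD.
have [z' [h [z'i z'D hi zh]]] := extend fr le zi zD.
have [H1 _] := pick_interlace f z' hi.
have -> : z = (fun k => z' (h k)) by apply: funext => k; rewrite zh.
by apply: leq_trans H1 (kn_le _ _ _).
Qed.

Lemma card_in_range n k (y : 'I_n -> C) (w : 'I_k -> C) (T : {set 'I_n}) :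
  injective y -> (forall i, i \in T -> exists j, w j = y i) -> (#|T| <= k)%N.
Proof.
move=> yi Hw.
have U : uniq [seq y i | i <- enum T] by rewrite map_inj_uniq ?enum_uniq.
have := uniq_leq_size U (s2 := [seq w j | j <- enum 'I_k]).
rewrite size_map -cardE size_map size_enum_ord; apply.
move=> x /mapP [i iT ->]; rewrite mem_enum in iT.
by have [j <-] := Hw i iT; rewrite map_f // mem_enum.
Qed.

Lemma split_bound (Dom : set C) f g n (y : 'I_n -> C) (T : {set 'I_n}) :
  injective y -> (forall i, i \notin T -> Dom (y i) /\ g (y i) = f (y i)) ->
  (sqneg (pick_mx g y) <= kn Dom f #|~: T| + #|T|)%N.
Proof.
move=> yi H.
have hi := @enum_val_inj _ (mem (~: T)).
have [_ H2] := pick_interlace g y hi.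
have cT := cardsC T; rewrite card_ord in cT.
have hT : forall k, @enum_val _ (mem (~: T)) k \notin T.
  by move=> k; have := enum_valP k; rewrite inE.
have E : pick_mx g (fun k => y (@enum_val _ (mem (~: T)) k)) = pick_mx f (fun k => y (enum_val k)).
  by apply/matrixP => a b; rewrite !mxE !(proj2 (H _ (hT _))).
rewrite E in H2.
have H3 : (sqneg (pick_mx f (fun k => y (@enum_val _ (mem (~: T)) k))) <= kn Dom f #|~: T|)%N.
  apply: kn_le; first by move=> a b /yi /hi.
  by move=> k; apply: (proj1 (H _ (hT _))).
apply: leq_trans H2 _; apply: leq_add H3 _.
have Ec : #|[eta mem (~: T)]| = #|~: T| by [].
rewrite Ec; lia.
Qed.

End App.

Local Open Scope classical_set_scope.

Theorem lemma2p3 (R : realType) (L : set R[i]) (f : R[i] -> R[i]) :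
  discrete_in_disk L ->
  (* (1) *)
  (forall (k : nat) (w : 'I_k -> R[i]) (g : R[i] -> R[i]),
     (forall j, `|w j| < 1) ->
     (forall z, (disk R `\` L) z -> g z = f z) ->
     forall n : nat, (1 <= n)%N ->
       let Dg := (disk R `\` L) `|` range w in
       [/\ (kn (disk R `\` L) f n <= kn Dg g n)%N,
           (kn Dg g n <= \max_(r < (minn k n).+1) (kn (disk R `\` L) f (n - r) + r))%N
         & (\max_(r < (minn k n).+1) (kn (disk R `\` L) f (n - r) + r)
              <= kn (disk R `\` L) f n + k)%N]) /\
  (* (2) *)
  (forall (k : nat) (z : 'I_k -> R[i]) (g : R[i] -> R[i]),
     injective z ->
     (forall j, (disk R `\` L) (z j)) ->
     (forall x, (disk R `\` L) x -> ~ range z x -> g x = f x) ->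
     forall n : nat, (1 <= n)%N ->
       (kn (disk R `\` L) g n <= kn (disk R `\` L) f n + k)%N).
Proof.
move=> hL; have fr := fresh hL.
set D := disk R `\` L.
split.
  move=> k w g _ Hg n _ Dg; split.
  - apply: kn_ub => y yi yD.
    have -> : pick_mx f y = pick_mx g y.
      by apply/matrixP => a b; rewrite !mxE !Hg.
    by apply: kn_le => // i; left.
  - apply: kn_ub => y yi yD.
    pose T := [set i | ~~ `[< D (y i) >]]%SET.
    have Hs := @split_bound R D f g n y T yi.
    have H1 : (sqneg (pick_mx g y) <= kn D f #|~: T| + #|T|)%N.
      apply: Hs => i; rewrite inE negbK => /asboolP Di; split => //; exact: Hg.
    have Tk : (#|T| <= k)%N.
      apply: (card_in_range (w := w) yi) => i; rewrite inE => /asboolP nD.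
      case: (yD i) => // -[j _ E]; by exists j.
    have Tn : (#|T| <= n)%N by rewrite -[X in (_ <= X)%N]card_ord max_card.
    have cT := cardsC T; rewrite card_ord in cT.
    have Hr : (#|T| < (minn k n).+1)%N by rewrite ltnS leq_min Tk Tn.
    apply: (leq_trans H1).
    have := @leq_bigmax _ (fun r : 'I_(minn k n).+1 => kn D f (n - r) + r)%N (Ordinal Hr).
    by have -> : (n - #|T| = #|~: T|)%N by lia.
  - apply/bigmax_leqP => r _.
    have rk : (r <= k)%N by have := ltn_ord r; rewrite ltnS leq_min => /andP[].
    have := @kn_mono R D f fr (n - r) n (leq_subr r n); lia.
move=> k z g zi zD Hg n _; apply: kn_ub => y yi yD.
pose T := [set i | `[< range z (y i) >]]%SET.
have H1 : (sqneg (pick_mx g y) <= kn D f #|~: T| + #|T|)%N.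
  apply: (split_bound (Dom := D)) => // i; rewrite inE => /asboolP nr.
  split; first exact: yD.
  by apply: Hg; [exact: yD | exact: nr].
have Tk : (#|T| <= k)%N.
  apply: (card_in_range (w := z) yi) => i; rewrite inE => /asboolP [j _ E].
  by exists j.
have Sn : (#|~: T| <= n)%N by rewrite -[X in (_ <= X)%N]card_ord max_card.
have := @kn_mono R D f fr _ _ Sn; lia.
Qed.
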